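(* In the setting below, let $f,g\in[0,\infty)^{n\times p}$ and let $W(g)$ be the weight matrix computed at $g$. If $\sum_{i,j}W(g)_{ij}f_{ij}\le\sum_{i,j}W(g)_{ij}g_{ij}$, then $\mathcal L(f)\le\mathcal L(g)$.
   Context: Let $M=(m_{ij})\in\{0,1\}^{n\times p}$, $m_i=\sum_jm_{ij}\ge1$ for all $i$, $m=\sum_im_i$, and fix constants $\hat\sigma_{1,j}>0$, $\hat\sigma_2>0$. For $0<b<c$ and $q_1,q_2>0$ with $q_1\tanh(q_2(c-b))=b$, let $d=b^2/2+(q_1/q_2)\ln\cosh(q_2(c-b))$ and $\rho_{b,c}(z)=z^2/2$ if $|z|\le b$, $d-(q_1/q_2)\ln\cosh(q_2(c-|z|))$ if $b\le|z|\le c$, $d$ if $|z|\ge c$. Let $\rho_1=\rho_{b_1,c_1}$, $\rho_2=\rho_{b_2,c_2}$ (each with admissible constants), $\psi_k=\rho_k'$, $w_k(z)=\psi_k(z)/z$ ($z\ne0$), $w_k(0)=1$, and $h_k(z)=\rho_k(\sqrt z)$. For $f\in[0,\infty)^{n\times p}$, $$\mathcal L(f)=\frac{\hat\sigma_2^2}{m}\sum_{i=1}^n m_i\,h_2\!\Big(\frac{1}{m_i\hat\sigma_2^2}\sum_{j=1}^p m_{ij}\hat\sigma_{1,j}^2\,h_1\big(f_{ij}/\hat\sigma_{1,j}^2\big)\Big).$$ For $g\in[0,\infty)^{n\times p}$ let $t_i(g)=\sqrt{\frac1{m_i}\sum_jm_{ij}\hat\sigma_{1,j}^2h_1(g_{ij}/\hat\sigma_{1,j}^2)}$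 and $W(g)_{ij}=m_{ij}\,w_1\big(\sqrt{g_{ij}}/\hat\sigma_{1,j}\big)\,w_2\big(t_i(g)/\hat\sigma_2\big)$. *)

(* Defs.v *)
From Stdlib Require Import Reals.
From Coquelicot Require Import Coquelicot.
Open Scope R_scope.

Fixpoint rsum (n : nat) (F : nat -> R) : R :=
  match n with
  | O => 0
  | S k => rsum k F + F k
  end.

Definition admissible (b c q1 q2 : R) : Prop :=
  0 < b /\ b < c /\ 0 < q1 /\ 0 < q2 /\ q1 * tanh (q2 * (c - b)) = b.

Definition rho_d (b c q1 q2 : R) : R :=
  b ^ 2 / 2 + (q1 / q2) * ln (cosh (q2 * (c - b))).

Definition rho (b c q1 q2 : R) (z : R) : R :=
  if Rle_dec (Rabs z) b then z ^ 2 / 2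
  else if Rle_dec (Rabs z) c then
    rho_d b c q1 q2 - (q1 / q2) * ln (cosh (q2 * (c - Rabs z)))
  else rho_d b c q1 q2.

Definition psi (b c q1 q2 : R) (z : R) : R := Derive (rho b c q1 q2) z.

Definition wfun (b c q1 q2 : R) (z : R) : R :=
  if Req_EM_T z 0 then 1 else psi b c q1 q2 z / z.

Definition hfun (b c q1 q2 : R) (z : R) : R := rho b c q1 q2 (sqrt z).

Section Loss.
Variables (b1 c1 q11 q12 b2 c2 q21 q22 : R).
Variables (n p : nat) (M : nat -> nat -> R) (sig1 : nat -> R) (sig2 : R).

Definition h1 := hfun b1 c1 q11 q12.
Definition h2 := hfun b2 c2 q21 q22.
Definition w1 := wfun b1 c1 q11 q12.
Definition w2 := wfun b2 c2 q21 q22.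

Definition mi (i : nat) : R := rsum p (fun j => M i j).
Definition mtot : R := rsum n mi.

Definition Loss (f : nat -> nat -> R) : R :=
  sig2 ^ 2 / mtot *
  rsum n (fun i => mi i *
    h2 (/ (mi i * sig2 ^ 2) *
        rsum p (fun j => M i j * sig1 j ^ 2 * h1 (f i j / sig1 j ^ 2)))).

Definition t_i (g : nat -> nat -> R) (i : nat) : R :=
  sqrt (/ mi i * rsum p (fun j => M i j * sig1 j ^ 2 * h1 (g i j / sig1 j ^ 2))).

Definition Wmat (g : nat -> nat -> R) (i j : nat) : R :=
  M i j * w1 (sqrt (g i j) / sig1 j) * w2 (t_i g i / sig2).
End Loss.

(* Main.v *)
Require Import Defs.
From Stdlib Require Import Reals Lra.
From Coquelicot Require Import Coquelicot.
Open Scope R_scope.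

Lemma glue (f f1 f2 : R -> R) x0 r l : 0 < r ->
  (forall y, x0 - r < y <= x0 -> f y = f1 y) ->
  (forall y, x0 <= y < x0 + r -> f y = f2 y) ->
  derivable_pt_lim f1 x0 l -> derivable_pt_lim f2 x0 l ->
  derivable_pt_lim f x0 l.
Proof.
  intros hr H1 H2 D1 D2 eps he.
  destruct (D1 eps he) as [d1 Hd1]. destruct (D2 eps he) as [d2 Hd2].
  assert (hm : 0 < Rmin r (Rmin d1 d2)).
  { destruct d1, d2; simpl; repeat apply Rmin_pos; auto. }
  exists (mkposreal _ hm). intros h hh hlt. simpl in hlt.
  assert (h1 : Rabs h < d1). { eapply Rlt_le_trans; [exact hlt|].
    eapply Rle_trans; [apply Rmin_r| apply Rmin_l]. }
  assert (h2 : Rabs h < d2). { eapply Rlt_le_trans; [exact hlt|].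
    eapply Rle_trans; [apply Rmin_r| apply Rmin_r]. }
  assert (h3 : Rabs h < r). { eapply Rlt_le_trans; [exact hlt| apply Rmin_l]. }
  destruct (Rle_lt_dec h 0) as [hn|hp].
  - rewrite Rabs_left1 in h3 by lra.
    rewrite (H1 (x0+h)) by lra. rewrite (H1 x0) by lra. apply Hd1; auto.
  - rewrite Rabs_right in h3 by lra.
    rewrite (H2 (x0+h)) by lra. rewrite (H2 x0) by lra. apply Hd2; auto.
Qed.

Lemma loc (f f1 : R -> R) x0 r l : 0 < r ->
  (forall y, x0 - r < y < x0 + r -> f y = f1 y) ->
  derivable_pt_lim f1 x0 l -> derivable_pt_lim f x0 l.
Proof.
  intros hr H D. apply (glue f f1 f1 x0 r l hr); auto; intros; apply H; lra.
Qed.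

Lemma tanh_mono x y : x <= y -> tanh x <= tanh y.
Proof.
  intros h. unfold tanh, sinh, cosh. rewrite !exp_Ropp.
  assert (ha := exp_pos x). assert (hb := exp_pos y).
  assert (hab : exp x <= exp y).
  { destruct (Req_dec x y). subst; lra. left; apply exp_increasing; lra. }
  set (A := exp x) in *. set (B := exp y) in *.
  replace ((A - / A) / 2 / ((A + / A) / 2)) with (1 - 2 / (A*A+1)) by (field; nra).
  replace ((B - / B) / 2 / ((B + / B) / 2)) with (1 - 2 / (B*B+1)) by (field; nra).
  assert (/ (B*B+1) <= / (A*A+1)). { apply Rinv_le_contravar; nra. }
  unfold Rdiv; lra.
Qed.

Lemma tanh_0 : tanh 0 = 0.
Proof. unfold tanh, sinh, cosh. rewrite Ropp_0, exp_0. field. Qed.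

Lemma tanh_nonneg x : 0 <= x -> 0 <= tanh x.
Proof. intros; rewrite <- tanh_0; apply tanh_mono; auto. Qed.

Lemma cosh_pos x : 0 < cosh x.
Proof. unfold cosh. assert (h:=exp_pos x). assert (h':= exp_pos (-x)). lra. Qed.

Lemma G_deriv b c q1 q2 y : 0 < q2 ->
  derivable_pt_lim (fun z => rho_d b c q1 q2 - q1 / q2 * ln (cosh (q2 * (c - z)))) y
    (q1 * tanh (q2 * (c - y))).
Proof.
  intros hq. apply is_derive_Reals. unfold cosh, tanh, sinh.
  auto_derive; unfold Rminus, cosh;
  assert (h:=exp_pos (q2*(c+-y))); assert (h':= exp_pos (-(q2*(c+-y))));
  set (A := exp (q2*(c+-y))) in *; set (B := exp (-(q2*(c+-y)))) in *.
  - lra.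
  - field. lra.
Qed.

Definition G b c q1 q2 z := rho_d b c q1 q2 - q1 / q2 * ln (cosh (q2 * (c - z))).

Definition psi0 b c q1 q2 z :=
  if Rle_dec z b then z else if Rle_dec z c then q1 * tanh (q2 * (c - z)) else 0.

Section R1.
Variables b c q1 q2 : R.
Hypothesis adm : admissible b c q1 q2.

Lemma rho_low y : Rabs y <= b -> rho b c q1 q2 y = y ^ 2 / 2.
Proof. intros h; unfold rho; destruct (Rle_dec (Rabs y) b); [auto|lra]. Qed.

Lemma rho_mid y : b <= y <= c -> rho b c q1 q2 y = G b c q1 q2 y.
Proof.
  destruct adm as (hb & hc & h1 & h2 & ht).
  intros h; unfold rho, G. rewrite Rabs_right by lra.
  destruct (Rle_dec y b).
  - assert (y = b) by lra. subst y. unfold rho_d. ring.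
  - destruct (Rle_dec y c); [auto|lra].
Qed.

Lemma rho_high y : c <= y -> rho b c q1 q2 y = rho_d b c q1 q2.
Proof.
  destruct adm as (hb & hc & h1 & h2 & ht).
  intros h; unfold rho. rewrite Rabs_right by lra.
  destruct (Rle_dec y b). lra.
  destruct (Rle_dec y c).
  - assert (y = c) by lra. subst y. rewrite Rminus_diag, Rmult_0_r.
    unfold cosh. rewrite Ropp_0, exp_0. replace ((1+1)/2) with 1 by field.
    rewrite ln_1. ring.
  - auto.
Qed.

Lemma sq_deriv y : derivable_pt_lim (fun z => z ^ 2 / 2) y y.
Proof. apply is_derive_Reals. auto_derive; auto. field. Qed.

Lemma cst_deriv k y : derivable_pt_lim (fun _ => k) y 0.
Proof. apply is_derive_Reals. auto_derive; auto. Qed.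

Lemma rho_deriv z : 0 <= z -> derivable_pt_lim (rho b c q1 q2) z (psi0 b c q1 q2 z).
Proof.
  assert (adm' := adm).
  destruct adm' as (hb & hc & h1 & h2 & ht).
  intros hz. unfold psi0.
  destruct (Rle_dec z b).
  - destruct (Req_dec z b) as [e|ne].
    + subst z. apply (glue _ (fun z => z^2/2) (G b c q1 q2) b (Rmin b (c-b))).
      * apply Rmin_pos; lra.
      * intros y hy. assert (Rmin b (c-b) <= b) by apply Rmin_l.
        apply rho_low. rewrite Rabs_right; lra.
      * intros y hy. assert (Rmin b (c-b) <= c-b) by apply Rmin_r.
        apply rho_mid. lra.
      * apply sq_deriv.
      * assert (D := G_deriv b c q1 q2 b h2). rewrite ht in D. exact D.
    + apply (loc _ (fun z => z^2/2) z (b - z)). lra.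
      * intros y hy. apply rho_low. apply Rabs_le; lra.
      * apply sq_deriv.
  - destruct (Rle_dec z c).
    + destruct (Req_dec z c) as [e|ne].
      * subst z. rewrite Rminus_diag, Rmult_0_r, tanh_0, Rmult_0_r.
        apply (glue _ (G b c q1 q2) (fun _ => rho_d b c q1 q2) c (c - b)).
        lra.
        -- intros y hy. apply rho_mid. lra.
        -- intros y hy. apply rho_high. lra.
        -- pose proof (G_deriv b c q1 q2 c h2) as D.
           rewrite Rminus_diag, Rmult_0_r, tanh_0, Rmult_0_r in D. exact D.
        -- apply cst_deriv.
      * apply (loc _ (G b c q1 q2) z (Rmin (z-b) (c-z))).
        apply Rmin_pos; lra.
        -- intros y hy. assert (Rmin (z-b) (c-z) <= z-b) by apply Rmin_l.
           assert (Rmin (z-b) (c-z) <= c-z) by apply Rmin_r. apply rho_mid. lra.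
        -- apply G_deriv; auto.
    + apply (loc _ (fun _ => rho_d b c q1 q2) z (z - c)). lra.
      * intros y hy. apply rho_high. lra.
      * apply cst_deriv.
Qed.
End R1.

Definition phi0 b c q1 q2 z :=
  if Rle_dec z b then 1 else if Rle_dec z c then q1 * tanh (q2 * (c - z)) / z else 0.

Section R2.
Variables b c q1 q2 : R.
Hypothesis adm : admissible b c q1 q2.

Lemma psi0_phi z : 0 <= z -> psi0 b c q1 q2 z = phi0 b c q1 q2 z * z.
Proof.
  destruct adm as (hb & hc & h1 & h2 & ht). intros hz.
  unfold psi0, phi0. destruct (Rle_dec z b). ring.
  destruct (Rle_dec z c). field. lra. ring.
Qed.

Lemma w_phi z : 0 <= z -> wfun b c q1 q2 z = phi0 b c q1 q2 z.
Proof.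
  destruct adm as (hb & hc & h1 & h2 & ht). intros hz.
  unfold wfun. destruct (Req_EM_T z 0).
  - subst. unfold phi0. destruct (Rle_dec 0 b); [auto|lra].
  - unfold psi. rewrite (is_derive_unique _ _ (psi0 b c q1 q2 z)).
    + rewrite psi0_phi by auto. field. auto.
    + apply is_derive_Reals. apply rho_deriv; auto.
Qed.

Lemma phi_nonneg z : 0 <= z -> 0 <= phi0 b c q1 q2 z.
Proof.
  destruct adm as (hb & hc & h1 & h2 & ht). intros hz.
  unfold phi0. destruct (Rle_dec z b). lra.
  destruct (Rle_dec z c). 2: lra.
  assert (0 <= tanh (q2 * (c - z))) by (apply tanh_nonneg; nra).
  apply Rmult_le_pos. nra. left; apply Rinv_0_lt_compat; lra.
Qed.

Lemma phi_mono t u : 0 <= t <= u -> phi0 b c q1 q2 u <= phi0 b c q1 q2 t.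
Proof.
  assert (hn := phi_nonneg).
  destruct adm as (hb & hc & h1 & h2 & ht). intros hz.
  destruct (Rle_dec u c) as [uc|uc].
  2: { unfold phi0 at 1. destruct (Rle_dec u b). lra. destruct (Rle_dec u c). lra.
       apply hn; lra. }
  destruct (Rle_dec u b) as [ub|ub].
  - unfold phi0. destruct (Rle_dec u b); [|lra]. destruct (Rle_dec t b); [lra|lra].
  - assert (tu : tanh (q2 * (c - u)) <= tanh (q2 * (c - t)) \/ True) by auto.
    assert (T1 : tanh (q2 * (c - u)) <= tanh (q2 * (c - b))) by (apply tanh_mono; nra).
    assert (T0 : 0 <= tanh (q2 * (c - u))) by (apply tanh_nonneg; nra).
    unfold phi0. destruct (Rle_dec u b); [lra|]. destruct (Rle_dec u c); [|lra].
    destruct (Rle_dec t b).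
    + apply (Rmult_le_reg_r u). lra. unfold Rdiv. rewrite Rmult_assoc, Rinv_l by lra. nra.
    + assert (T2 : tanh (q2 * (c - u)) <= tanh (q2 * (c - t))) by (apply tanh_mono; nra).
      destruct (Rle_dec t c); [|lra].
      unfold Rdiv. apply Rmult_le_compat. nra. left; apply Rinv_0_lt_compat; lra.
      nra. apply Rinv_le_contravar; lra.
Qed.

Lemma tangent_rho t s : 0 <= t -> 0 <= s ->
  rho b c q1 q2 s - wfun b c q1 q2 t * s ^ 2 / 2 <= rho b c q1 q2 t - wfun b c q1 q2 t * t ^ 2 / 2.
Proof.
  intros ht hs. rewrite w_phi by auto.
  set (k := phi0 b c q1 q2 t).
  set (F := fun u => rho b c q1 q2 u - k * u ^ 2 / 2).
  set (dF := fun u => psi0 b c q1 q2 u - k * u).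
  assert (DF : forall u, 0 <= u -> is_derive F u (dF u)).
  { intros u hu. unfold F, dF. apply is_derive_Reals.
    replace (psi0 b c q1 q2 u - k * u) with (psi0 b c q1 q2 u - k * (INR 2 * u ^ (2-1)) / 2)
      by (simpl; field).
    apply derivable_pt_lim_minus. apply rho_deriv; auto.
    unfold Rdiv. apply derivable_pt_lim_scal_right. apply derivable_pt_lim_scal.
    apply derivable_pt_lim_pow. }
  assert (CF : forall u, 0 <= u -> continuity_pt F u).
  { intros u hu. apply continuity_pt_filterlim.
    apply (ex_derive_continuous (K:=R_AbsRing) (V:=R_NormedModule) F u).
    eexists; apply DF; auto. }
  destruct (MVT_gen F t s dF) as [x [hx e]].
  - intros x hx. apply DF. assert (Rmin t s >= 0). { apply Rmin_case; lra. } lra.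
  - intros x hx. apply CF. assert (Rmin t s >= 0). { apply Rmin_case; lra. } lra.
  - change (F s <= F t).
    assert (Rmin t s >= 0) by (apply Rmin_case; lra).
    assert (x >= 0) by lra.
    unfold dF in e. rewrite psi0_phi in e by lra.
    destruct (Rle_dec t s) as [hts|hts].
    + rewrite Rmin_left in hx by lra. rewrite Rmax_right in hx by lra.
      assert (phi0 b c q1 q2 x <= k) by (apply phi_mono; lra).
      assert (Hq : (phi0 b c q1 q2 x * x - k * x) * (s - t) <= 0).
      { apply Rmult_le_0_r. 2: lra.
        assert (0 <= (k - phi0 b c q1 q2 x) * x) by (apply Rmult_le_pos; lra). lra. }
      lra.
    + rewrite Rmin_right in hx by lra. rewrite Rmax_left in hx by lra.
      assert (k <= phi0 b c q1 q2 x) by (apply phi_mono; lra).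
      assert (Hq : (phi0 b c q1 q2 x * x - k * x) * (t - s) >= 0).
      { apply Rle_ge, Rmult_le_pos. 2: lra.
        assert (0 <= (phi0 b c q1 q2 x - k) * x) by (apply Rmult_le_pos; lra). lra. }
      assert (e' : F s - F t = - ((phi0 b c q1 q2 x * x - k * x) * (t - s))) by (rewrite e; ring).
      lra.
Qed.
End R2.

Section R3.
Variables b c q1 q2 : R.
Hypothesis adm : admissible b c q1 q2.

Lemma w_nonneg z : 0 <= z -> 0 <= wfun b c q1 q2 z.
Proof. intros; rewrite w_phi; auto; apply phi_nonneg; auto. Qed.

Lemma h_tangent x y : 0 <= x -> 0 <= y ->
  hfun b c q1 q2 x <= hfun b c q1 q2 y + wfun b c q1 q2 (sqrt y) / 2 * (x - y).
Proof.
  intros hx hy. unfold hfun.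
  assert (T := tangent_rho b c q1 q2 adm (sqrt y) (sqrt x) (sqrt_pos y) (sqrt_pos x)).
  rewrite !pow2_sqrt in T by auto. lra.
Qed.

Lemma h_nonneg x : 0 <= x -> 0 <= hfun b c q1 q2 x.
Proof.
  destruct adm as (hb & _). intros hx. unfold hfun.
  assert (T := tangent_rho b c q1 q2 adm (sqrt x) 0 (sqrt_pos x) (Rle_refl 0)).
  rewrite rho_low in T by (rewrite Rabs_R0; lra).
  assert (0 <= wfun b c q1 q2 (sqrt x) * sqrt x ^ 2).
  { apply Rmult_le_pos. apply w_nonneg, sqrt_pos. apply pow2_ge_0. }
  lra.
Qed.
End R3.

Lemma rsum_le n F G : (forall k, (k<n)%nat -> F k <= G k) -> rsum n F <= rsum n G.
Proof. induction n; simpl; intros H. lra. apply Rplus_le_compat; auto. Qed.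
Lemma rsum_ext n F G : (forall k, (k<n)%nat -> F k = G k) -> rsum n F = rsum n G.
Proof. induction n; simpl; intros H. lra. rewrite IHn, H; auto. Qed.
Lemma rsum_plus n F G : rsum n (fun k => F k + G k) = rsum n F + rsum n G.
Proof. induction n; simpl. lra. rewrite IHn; ring. Qed.
Lemma rsum_scal n a F : rsum n (fun k => a * F k) = a * rsum n F.
Proof. induction n; simpl. lra. rewrite IHn; ring. Qed.
Lemma rsum_minus n F G : rsum n (fun k => F k - G k) = rsum n F - rsum n G.
Proof. induction n; simpl. lra. rewrite IHn; ring. Qed.
Lemma rsum_nonneg n F : (forall k, (k<n)%nat -> 0 <= F k) -> 0 <= rsum n F.
Proof. intros H. replace 0 with (rsum n (fun _ => 0)). apply rsum_le; auto.
  clear; induction n; simpl; lra. Qed.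

Lemma row (b1 c1 q11 q12 b2 c2 q21 q22 : R) (p : nat) (Mi s fi gi : nat -> R) (sig2 : R) :
  admissible b1 c1 q11 q12 -> admissible b2 c2 q21 q22 ->
  (forall j, (j < p)%nat -> 0 <= Mi j) ->
  1 <= rsum p Mi ->
  (forall j, (j < p)%nat -> 0 < s j) -> 0 < sig2 ->
  (forall j, (j < p)%nat -> 0 <= fi j) ->
  (forall j, (j < p)%nat -> 0 <= gi j) ->
  let Af := rsum p (fun j => Mi j * s j ^ 2 * hfun b1 c1 q11 q12 (fi j / s j ^ 2)) in
  let Ag := rsum p (fun j => Mi j * s j ^ 2 * hfun b1 c1 q11 q12 (gi j / s j ^ 2)) in
  let w2i := wfun b2 c2 q21 q22 (sqrt (/ rsum p Mi * Ag) / sig2) in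
  let W := fun j => Mi j * wfun b1 c1 q11 q12 (sqrt (gi j) / s j) * w2i in
  rsum p Mi * hfun b2 c2 q21 q22 (/ (rsum p Mi * sig2 ^ 2) * Af)
  <= rsum p Mi * hfun b2 c2 q21 q22 (/ (rsum p Mi * sig2 ^ 2) * Ag)
     + / (4 * sig2 ^ 2) * (rsum p (fun j => W j * fi j) - rsum p (fun j => W j * gi j)).
Proof.
  intros A1 A2 HM Hm Hs Hs2 Hf Hg Af Ag w2i W.
  set (m := rsum p Mi) in *.
  set (D := rsum p (fun j => Mi j * wfun b1 c1 q11 q12 (sqrt (gi j) / s j) * (fi j - gi j))).
  assert (HA : Af <= Ag + / 2 * D).
  { unfold Af, Ag, D. rewrite <- rsum_scal, <- rsum_plus. apply rsum_le.
    intros j hj. assert (hs := Hs j hj). assert (hs2 : 0 < s j ^ 2) by (apply pow_lt; auto).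
    assert (T := h_tangent _ _ _ _ A1 (fi j / s j ^ 2) (gi j / s j ^ 2)).
    rewrite sqrt_div_alt, sqrt_pow2 in T by lra.
    assert (hf := Hf j hj). assert (hg := Hg j hj).
    assert (T' := T (Rdiv_le_0_compat _ _ hf hs2) (Rdiv_le_0_compat _ _ hg hs2)).
    assert (hMs : 0 <= Mi j * s j ^ 2) by (apply Rmult_le_pos; auto; lra).
    apply (Rmult_le_compat_l _ _ _ hMs) in T'.
    replace (Mi j * s j ^ 2 * (hfun b1 c1 q11 q12 (gi j / s j ^ 2) +
        wfun b1 c1 q11 q12 (sqrt (gi j) / s j) / 2 * (fi j / s j ^ 2 - gi j / s j ^ 2)))
      with (Mi j * s j ^ 2 * hfun b1 c1 q11 q12 (gi j / s j ^ 2) +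
            / 2 * (Mi j * wfun b1 c1 q11 q12 (sqrt (gi j) / s j) * (fi j - gi j))) in T'
      by (field; lra).
    exact T'. }
  assert (Af0 : 0 <= Af).
  { apply rsum_nonneg. intros j hj. assert (hs := Hs j hj).
    apply Rmult_le_pos. apply Rmult_le_pos; auto. apply pow2_ge_0.
    apply h_nonneg; auto. apply Rdiv_le_0_compat. auto. apply pow_lt; auto. }
  assert (Ag0 : 0 <= Ag).
  { apply rsum_nonneg. intros j hj. assert (hs := Hs j hj).
    apply Rmult_le_pos. apply Rmult_le_pos; auto. apply pow2_ge_0.
    apply h_nonneg; auto. apply Rdiv_le_0_compat. auto. apply pow_lt; auto. }
  assert (hm : 0 < m) by lra.
  assert (hq : 0 < sig2 ^ 2) by (apply pow_lt; auto).
  assert (hinv : 0 < / (m * sig2 ^ 2)) by (apply Rinv_0_lt_compat; nra).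
  assert (T := h_tangent _ _ _ _ A2 (/ (m * sig2 ^ 2) * Af) (/ (m * sig2 ^ 2) * Ag)).
  assert (T' := T (Rmult_le_pos _ _ (Rlt_le _ _ hinv) Af0) (Rmult_le_pos _ _ (Rlt_le _ _ hinv) Ag0)).
  assert (Es : sqrt (/ (m * sig2 ^ 2) * Ag) = sqrt (/ m * Ag) / sig2).
  { rewrite <- (sqrt_pow2 sig2) at 2 by lra. rewrite <- sqrt_div_alt by auto.
    f_equal. field. split; lra. }
  rewrite Es in T'. fold w2i in T'.
  assert (w0 : 0 <= w2i).
  { apply w_nonneg; auto. apply Rdiv_le_0_compat. apply sqrt_pos. auto. }
  assert (ED : rsum p (fun j => W j * fi j) - rsum p (fun j => W j * gi j) = w2i * D).
  { rewrite <- rsum_minus. unfold D. rewrite <- rsum_scal. apply rsum_ext.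
    intros; unfold W; ring. }
  rewrite ED.
  assert (K : w2i / 2 * (/ (m * sig2 ^ 2) * Af - / (m * sig2 ^ 2) * Ag)
              <= w2i / 2 * (/ (m * sig2 ^ 2) * (/ 2 * D))).
  { apply Rmult_le_compat_l. lra. rewrite <- Rmult_minus_distr_l.
    apply Rmult_le_compat_l; lra. }
  apply (Rmult_le_compat_l m) in T'; [|lra].
  assert (E2 : m * (w2i / 2 * (/ (m * sig2 ^ 2) * (/ 2 * D))) = / (4 * sig2 ^ 2) * (w2i * D))
    by (field; lra).
  assert (m * (w2i / 2 * (/ (m * sig2 ^ 2) * Af - / (m * sig2 ^ 2) * Ag))
          <= m * (w2i / 2 * (/ (m * sig2 ^ 2) * (/ 2 * D)))) by (apply Rmult_le_compat_l; lra).
  lra.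
Qed.

Theorem lemma3
  (b1 c1 q11 q12 b2 c2 q21 q22 : R)
  (n p : nat) (M : nat -> nat -> R) (sig1 : nat -> R) (sig2 : R)
  (f g : nat -> nat -> R) :
  admissible b1 c1 q11 q12 ->
  admissible b2 c2 q21 q22 ->
  (forall i j, (i < n)%nat -> (j < p)%nat -> M i j = 0 \/ M i j = 1) ->
  (forall i, (i < n)%nat -> 1 <= mi p M i) ->
  (forall j, (j < p)%nat -> 0 < sig1 j) ->
  0 < sig2 ->
  (forall i j, (i < n)%nat -> (j < p)%nat -> 0 <= f i j) ->
  (forall i j, (i < n)%nat -> (j < p)%nat -> 0 <= g i j) ->
  rsum n (fun i => rsum p (fun j =>
     Wmat b1 c1 q11 q12 b2 c2 q21 q22 p M sig1 sig2 g i j * f i j))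
  <= rsum n (fun i => rsum p (fun j =>
     Wmat b1 c1 q11 q12 b2 c2 q21 q22 p M sig1 sig2 g i j * g i j)) ->
  Loss b1 c1 q11 q12 b2 c2 q21 q22 n p M sig1 sig2 f
  <= Loss b1 c1 q11 q12 b2 c2 q21 q22 n p M sig1 sig2 g.
Proof.
  intros A1 A2 HM Hm Hs Hs2 Hf Hg Hsum.
  assert (HM0 : forall i j, (i < n)%nat -> (j < p)%nat -> 0 <= M i j).
  { intros i j hi hj. destruct (HM i j hi hj) as [e|e]; rewrite e; lra. }
  unfold Loss.
  set (K := / (4 * sig2 ^ 2)).
  assert (Hrow : forall i, (i < n)%nat ->
     mi p M i * h2 b2 c2 q21 q22 (/ (mi p M i * sig2 ^ 2) *
        rsum p (fun j => M i j * sig1 j ^ 2 * h1 b1 c1 q11 q12 (f i j / sig1 j ^ 2)))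
     <= mi p M i * h2 b2 c2 q21 q22 (/ (mi p M i * sig2 ^ 2) *
        rsum p (fun j => M i j * sig1 j ^ 2 * h1 b1 c1 q11 q12 (g i j / sig1 j ^ 2)))
        + K * (rsum p (fun j => Wmat b1 c1 q11 q12 b2 c2 q21 q22 p M sig1 sig2 g i j * f i j)
               - rsum p (fun j => Wmat b1 c1 q11 q12 b2 c2 q21 q22 p M sig1 sig2 g i j * g i j))).
  { intros i hi. unfold K, Wmat, t_i, mi, h1, h2, w1, w2.
    apply (row b1 c1 q11 q12 b2 c2 q21 q22 p (M i) sig1 (f i) (g i) sig2); auto.
    apply Hm; auto. }
  apply rsum_le in Hrow.
  rewrite rsum_plus, rsum_scal, rsum_minus in Hrow.
  assert (K0 : 0 < K) by (unfold K; apply Rinv_0_lt_compat; assert (0 < sig2^2) by (apply pow_lt; auto); lra).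
  assert (mt : 0 <= mtot n p M).
  { unfold mtot. apply rsum_nonneg. intros i hi. assert (H := Hm i hi). lra. }
  apply Rmult_le_compat_l.
  - apply Rmult_le_pos. apply pow2_ge_0. destruct mt as [mt|mt].
    left; apply Rinv_0_lt_compat; auto. rewrite <- mt, Rinv_0. lra.
  - assert (0 <= K * (rsum n (fun i => rsum p (fun j =>
        Wmat b1 c1 q11 q12 b2 c2 q21 q22 p M sig1 sig2 g i j * g i j)) -
       rsum n (fun i => rsum p (fun j =>
        Wmat b1 c1 q11 q12 b2 c2 q21 q22 p M sig1 sig2 g i j * f i j)))).
    { apply Rmult_le_pos; lra. }
    lra.
Qed.
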